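(* Let $G$ be a profinite group and $k$ an algebraically closed field (with the discrete topology). Let $V$ and $W$ be irreducible smooth representations of $G$ over $k$ and $\chi$ a one-dimensional smooth character of $G$ over $k$. Then $\chi^{\oplus2}$ is not a subrepresentation of $V\otimes W$. *)

(* Defs.v *)
From HB Require Import structures.
From mathcomp Require Import all_boot all_order all_algebra.
From mathcomp Require Import boolp classical_sets topology.

Set Implicit Arguments.
Unset Strict Implicit.
Unset Printing Implicit Defensive.

Import Order.TTheory GRing.Theory.
Local Open Scope classical_set_scope.
Local Open Scope ring_scope.

Record profiniteGroup := ProfiniteGroup {
  pg_sort :> topologicalType;
  pg_mul : pg_sort -> pg_sort -> pg_sort;
  pg_inv : pg_sort -> pg_sort;
  pg_one : pg_sort;
  pg_mulA : forall x y z, pg_mul x (pg_mul y z) = pg_mul (pg_mul x y) z;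
  pg_mul1g : forall x, pg_mul pg_one x = x;
  pg_mulg1 : forall x, pg_mul x pg_one = x;
  pg_mulVg : forall x, pg_mul (pg_inv x) x = pg_one;
  pg_mulgV : forall x, pg_mul x (pg_inv x) = pg_one;
  pg_mul_cont : continuous (fun p : pg_sort * pg_sort => pg_mul p.1 p.2);
  pg_inv_cont : continuous pg_inv;
  pg_compact : compact [set: pg_sort];
  pg_hausdorff : hausdorff_space pg_sort;
  pg_totally_disconnected : totally_disconnected [set: pg_sort]
}.

Section Reps.
Variables (G : profiniteGroup) (k : fieldType).

Definition is_rep (V : lmodType k) (rho : G -> V -> V) : Prop :=
  [/\ (forall g (a : k) (u v : V), rho g (a *: u + v) = a *: rho g u + rho g v),
      (forall v, rho (pg_one G) v = v) &
      (forall g h v, rho (pg_mul g h) v = rho g (rho h v))].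

Definition is_smooth_rep (V : lmodType k) (rho : G -> V -> V) : Prop :=
  is_rep rho /\ forall v : V, open [set g : G | rho g v = v].

Definition is_subspace (V : lmodType k) (S : set V) : Prop :=
  S 0 /\ forall (a : k) u v, S u -> S v -> S (a *: u + v).

Definition irreducible_rep (V : lmodType k) (rho : G -> V -> V) : Prop :=
  (exists v : V, v != 0) /\
  forall S : set V, is_subspace S -> (forall g v, S v -> S (rho g v)) ->
    S = [set 0] \/ S = [set: V].

(* One-dimensional smooth character: a homomorphism G -> k^x with open kernel
   (i.e. the smooth representation g |-> multiplication by chi g on k). *)
Definition is_smooth_char (chi : G -> k) : Prop :=
  [/\ chi (pg_one G) = 1,
      (forall g h, chi (pg_mul g h) = chi g * chi h) &
      open [set g : G | chi g = 1]].

(* An element of V (x)_k W is written as a formal finite sum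
   \sum_i v_i (x) w_i, encoded by the list of pairs (v_i, w_i).
   Two formal sums denote the same tensor iff every k-bilinear form
   V x W -> k takes the same value on them
   (V (x) W embeds into the dual of Bil(V,W), the dual space of V (x) W). *)
Definition bilinear_form (V W : lmodType k) (B : V -> W -> k) : Prop :=
  (forall (a : k) v v' w, B (a *: v + v') w = a * B v w + B v' w) /\
  (forall (a : k) v w w', B v (a *: w + w') = a * B v w + B v w').

Definition tensor (V W : lmodType k) := seq (V * W).

Definition tensor_eval (V W : lmodType k) (B : V -> W -> k) (t : tensor V W) : k :=
  \sum_(p <- t) B p.1 p.2.

Definition tensor_eq (V W : lmodType k) (t t' : tensor V W) : Prop :=
  forall B : V -> W -> k, bilinear_form B -> tensor_eval B t = tensor_eval B t'.

Definition tensor_zero (V W : lmodType k) : tensor V W := [::].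
Definition tensor_add (V W : lmodType k) (t t' : tensor V W) : tensor V W := t ++ t'.
Definition tensor_scale (V W : lmodType k) (a : k) (t : tensor V W) : tensor V W :=
  map (fun p => (a *: p.1, p.2)) t.

Definition tensor_act (V W : lmodType k) (rhoV : G -> V -> V) (rhoW : G -> W -> W)
  (g : G) (t : tensor V W) : tensor V W :=
  map (fun p => (rhoV g p.1, rhoW g p.2)) t.

(* chi^{(+)2} is a subrepresentation of V (x) W : there is an injective
   G-equivariant linear map chi (+) chi -> V (x) W, i.e. two linearly
   independent tensors t1, t2 (the images of the standard basis) on which
   G acts through chi. *)
Definition char_twice_in_tensor (V W : lmodType k) (rhoV : G -> V -> V)
  (rhoW : G -> W -> W) (chi : G -> k) : Prop :=
  exists t1 t2 : tensor V W,
    [/\ forall g, tensor_eq (tensor_act rhoV rhoW g t1) (tensor_scale (chi g) t1),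
        forall g, tensor_eq (tensor_act rhoV rhoW g t2) (tensor_scale (chi g) t2) &
        forall a b : k,
          tensor_eq (tensor_add (tensor_scale a t1) (tensor_scale b t2)) (tensor_zero V W) ->
          a = 0 /\ b = 0].

End Reps.

(* Main.v *)
From HB Require Import structures.
Require Import Defs.
From mathcomp Require Import all_boot all_order all_algebra.
From mathcomp Require Import boolp classical_sets topology.
From mathcomp Require Import finmap.

Set Implicit Arguments.
Unset Strict Implicit.
Unset Printing Implicit Defensive.
Import Order.TTheory GRing.Theory.
Local Open Scope classical_set_scope.
Local Open Scope ring_scope.

Section LinLike.
Variables (k : fieldType) (V W : lmodType k) (h : V -> W).
Hypothesis hl : forall a u w, h (a *: u + w) = a *: h u + h w.

Lemma ll0 : h 0 = 0.
Proof.
have := hl 1 0 0; rewrite !(scale1r, addr0) => e.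
by apply: (@addrI _ (h 0)); rewrite addr0 -e.
Qed.

Lemma llD u w : h (u + w) = h u + h w.
Proof. by have := hl 1 u w; rewrite !scale1r. Qed.

Lemma llZ a u : h (a *: u) = a *: h u.
Proof. by rewrite -[a *: u]addr0 hl ll0 addr0. Qed.

Lemma llsum I r (P : pred I) (F : I -> V) :
  h (\sum_(i <- r | P i) F i) = \sum_(i <- r | P i) h (F i).
Proof.
elim/big_rec2: _ => [|i y1 y2 _ <-]; first exact: ll0.
by rewrite llD.
Qed.
End LinLike.

Section LinLikeK.
Variables (k : fieldType) (V : lmodType k) (h : V -> k).
Hypothesis hl : forall a u w, h (a *: u + w) = a * h u + h w.

Lemma kl0 : h 0 = 0.
Proof.
have := hl 1 0 0; rewrite !(scale1r, addr0, mul1r) => e.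
by apply: (@addrI _ (h 0)); rewrite addr0 -e.
Qed.

Lemma klsum I r (P : pred I) (c : I -> k) (F : I -> V) :
  h (\sum_(i <- r | P i) c i *: F i) = \sum_(i <- r | P i) c i * h (F i).
Proof.
elim/big_rec2: _ => [|i y1 y2 _ <-]; first exact: kl0.
by rewrite hl.
Qed.
End LinLikeK.

Section Span.
Variables (k : fieldType) (V : lmodType k).

Definition lc (s : seq V) (x : nat -> k) : V := \sum_(i < size s) x i *: s`_i.
Definition spanned (s : seq V) (v : V) := exists x, v = lc s x.
Definition indep (s : seq V) :=
  forall x, lc s x = 0 -> forall i, (i < size s)%N -> x i = 0.

Lemma lc_cons (a : V) s x : lc (a :: s) x = x 0%N *: a + lc s (fun i => x i.+1).
Proof. by rewrite /lc /= big_ord_recl. Qed.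

Lemma lc_lin s a x y : a *: lc s x + lc s y = lc s (fun i => a * x i + y i).
Proof.
rewrite /lc scaler_sumr -big_split /=; apply: eq_bigr => i _.
by rewrite scalerDl scalerA.
Qed.

Lemma lc_scale s c x : lc s (fun i => c * x i) = c *: lc s x.
Proof. by rewrite /lc scaler_sumr; apply: eq_bigr => i _; rewrite scalerA. Qed.

Lemma spanned0 s : spanned s 0.
Proof. by exists (fun _ => 0); rewrite /lc big1 // => i _; rewrite scale0r. Qed.

Lemma spanned_lin s a u w : spanned s u -> spanned s w -> spanned s (a *: u + w).
Proof. by move=> [x ->] [y ->]; exists (fun i => a * x i + y i); rewrite lc_lin. Qed.

Lemma spanned_mem s v : v \in s -> spanned s v.
Proof.
move=> vs; exists (fun i => (i == index v s)%:R).
rewrite /lc (bigD1 (Ordinal (etrans (index_mem v s) vs))) //=.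
rewrite (nth_index 0 vs) eqxx scale1r big1 ?addr0 // => i ni.
have -> : (i == index v s :> nat) = false.
  by apply/negbTE; apply: contra ni => /eqP e; apply/eqP; apply: val_inj.
by rewrite scale0r.
Qed.

Lemma spanned_sum s I r (P : pred I) (F : I -> V) :
  (forall i, P i -> spanned s (F i)) -> spanned s (\sum_(i <- r | P i) F i).
Proof.
move=> hF; apply: (big_ind (spanned s)) => //; first exact: spanned0.
by move=> u w hu hw; have := spanned_lin 1 hu hw; rewrite scale1r.
Qed.

Lemma basis_ex (s : seq V) : exists e, indep e /\ forall v, spanned s v -> spanned e v.
Proof.
elim: s => [|a s [e [ie se]]].
  exists [::]; split; first by move=> x _ i.
  by move=> v [x ->]; exists x.
case: (pselect (spanned e a)) => [[y hy]|na].
  exists e; split=> // v [x ->]; rewrite lc_cons.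
  have [z hz] := se _ (ex_intro _ (fun i => x i.+1) erefl).
  by rewrite hy hz lc_lin; exists (fun i => x 0%N * y i + z i).
exists (a :: e); split.
  move=> x hx i hi; rewrite lc_cons in hx.
  have x0 : x 0%N = 0.
    apply/eqP; apply: contraT => nz; exfalso; apply: na.
    exists (fun i => - (x 0%N)^-1 * x i.+1); rewrite lc_scale.
    have : x 0%N *: a = - lc e (fun i => x i.+1).
      by apply/eqP; rewrite -addr_eq0 hx.
    move=> /(congr1 (fun u => (x 0%N)^-1 *: u)).
    by rewrite scalerA mulVf // scale1r scaleNr -scalerN.
  case: i hi => [|i] hi; first exact: x0.
  apply: (ie (fun i => x i.+1)) => //.
  by rewrite x0 scale0r add0r in hx.
move=> v [x ->]; rewrite lc_cons.
have [z hz] := se _ (ex_intro _ (fun i => x i.+1) erefl).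
by exists (fun i => if i is j.+1 then z j else x 0%N); rewrite lc_cons hz.
Qed.

Lemma fin_basis (s : seq V) : (forall v, spanned s v) ->
  exists n (e : 'I_n -> V) (c : V -> 'rV[k]_n),
    (forall v, \sum_j c v 0 j *: e j = v) /\
    (forall x : 'rV[k]_n, c (\sum_j x 0 j *: e j) = x).
Proof.
move=> hs; have [e [ie se]] := basis_ex s.
have ex : forall v, exists x : 'rV_(size e), \sum_j x 0 j *: e`_j = v.
  move=> v; have [y ->] := se v (hs v); exists (\row_j y j).
  by rewrite /lc; apply: eq_bigr => j _; rewrite mxE.
exists (size e), (fun j => e`_j), (fun v => sval (cid (ex v))); split.
  by move=> v; exact: (svalP (cid (ex v))).
move=> x; set v := \sum_j _ *: _.
have hv := svalP (cid (ex v)); set y := sval _ in hv *.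
pose z i := oapp (fun j : 'I_(size e) => (y - x) 0 j) 0 (insub i).
have hz : lc e z = 0.
  rewrite /lc; under eq_bigr => j _ do rewrite /z valK /= !mxE scalerBl.
  by rewrite sumrB hv subrr.
apply/rowP => j; have := ie z hz j (ltn_ord j).
rewrite /z valK /= !mxE => /eqP; rewrite subr_eq0 => /eqP.
by [].
Qed.
End Span.



Section OneRep.
Variables (G : profiniteGroup) (k : fieldType) (V : lmodType k) (rho : G -> V -> V).
Hypothesis hrep : is_rep rho.
Variables (n : nat) (e : 'I_n -> V) (c : V -> 'rV[k]_n).
Hypothesis ec : forall v, \sum_j c v 0 j *: e j = v.
Hypothesis ce : forall x : 'rV[k]_n, c (\sum_j x 0 j *: e j) = x.

Lemma c_lin a u w : c (a *: u + w) = a *: c u + c w.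
Proof.
rewrite -{1}(ec u) -{1}(ec w).
have -> : a *: (\sum_j c u 0 j *: e j) + \sum_j c w 0 j *: e j
          = \sum_j (a *: c u + c w) 0 j *: e j.
  rewrite scaler_sumr -big_split; apply: eq_bigr => j _.
  by rewrite !mxE scalerDl scalerA.
by rewrite ce.
Qed.

Lemma c_e j : c (e j) = delta_mx 0 j.
Proof.
rewrite -[RHS]ce; congr c.
rewrite (bigD1 j) //= big1 ?addr0 => [|i nij]; first by rewrite mxE !eqxx scale1r.
by rewrite mxE eqxx (negbTE nij) scale0r.
Qed.

Lemma rho_lin g a u w : rho g (a *: u + w) = a *: rho g u + rho g w.
Proof. by case: hrep => h _ _; apply: h. Qed.

Definition Amx (g : G) : 'M[k]_n := \matrix_(j < n) c (rho g (e j)).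

Lemma c_act g v : c (rho g v) = c v *m Amx g.
Proof.
rewrite -{1}(ec v) (llsum (rho_lin g)).
under eq_bigr => j _ do rewrite (llZ (rho_lin g)).
rewrite (llsum c_lin); under eq_bigr => j _ do rewrite (llZ c_lin).
apply/rowP => l; rewrite !mxE summxE; apply: eq_bigr => j _.
by rewrite !mxE.
Qed.

Lemma Amx_inv g : Amx g *m Amx (pg_inv g) = 1%:M.
Proof.
case: hrep => _ h1 hmul.
apply/row_matrixP => j; rewrite row_mul rowK -c_act -hmul pg_mulVg h1 c_e.
by rewrite row1.
Qed.

Lemma irr_mx (irr : irreducible_rep rho) p (U : 'M[k]_(p, n)) :
  (forall g, (U *m Amx g <= U)%MS) -> U = 0 \/ row_full U.
Proof.
move=> hU.
pose S := [set v : V | (c v <= U)%MS].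
have c0 : c 0 = 0 by apply: (ll0 c_lin).
have Ssub : is_subspace S.
  split; first by rewrite /S /= c0 sub0mx.
  move=> a u w; rewrite /S /= c_lin => hu hw.
  by rewrite addmx_sub ?scalemx_sub.
have Sst : forall g v, S v -> S (rho g v).
  move=> g v; rewrite /S /= c_act => hv.
  exact: submx_trans (submxMr _ hv) (hU g).
case: irr => _ /(_ S Ssub Sst) [S0|ST]; [left|right].
  apply/row_matrixP => i; rewrite row0.
  have : S (\sum_j (row i U) 0 j *: e j) by rewrite /S /= ce row_sub.
  rewrite S0 /= => ev0.
  by rewrite -[LHS]ce ev0 c0.
rewrite -sub1mx; apply/row_subP => j; rewrite row1 -c_e.
have : S (e j) by rewrite ST.
by [].
Qed.

Lemma dim_gt0 (irr : irreducible_rep rho) : (0 < n)%N.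
Proof.
case: irr => [[v nv] _]; apply: contraNT nv; rewrite -eqn0Ngt => /eqP n0.
rewrite -(ec v) big1 // => j _.
by have := ltn_ord j; rewrite {2}n0.
Qed.
End OneRep.



Section Orbit.
Variable G : profiniteGroup.
Definition pG : ptopologicalType :=
  HB.pack_for ptopologicalType (pg_sort G) (isPointed.Build (pg_sort G) (pg_one G)).

Lemma left_transl_cont (c : G) : continuous (fun x : G => pg_mul c x).
Proof.
move=> x.
have h : {for x, continuous (fun y : G => (c, y))}.
  by apply: cvg_pair; [exact: cvg_cst | exact: cvg_id].
exact: (continuous_comp h (@pg_mul_cont G (c, x))).
Qed.

Lemma finite_orbit (k : fieldType) (V : lmodType k) (rho : G -> V -> V)
  (hV : is_smooth_rep rho) (v : V) :
  exists gs : seq G, forall g, exists2 h, h \in gs & rho g v = rho h v.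
Proof.
case: hV => [[hlin h1 hmul] hop].
have cc : @cover_compact G [set: G].
  have h : @compact pG [set: pG] := @pg_compact G.
  rewrite compact_cover in h; exact: h.
pose f (g : G) := [set x : G | rho x v = rho g v].
have fop : forall g, [set: G] g -> open (f g).
  move=> g _.
  have -> : f g = (fun x => pg_mul (pg_inv g) x) @^-1` [set x | rho x v = v].
    apply/seteqP; split => x /=.
      by rewrite /f /= hmul => ->; rewrite -hmul pg_mulVg h1.
    move=> e; rewrite /f /=.
    have -> : x = pg_mul g (pg_mul (pg_inv g) x) by rewrite pg_mulA pg_mulgV pg_mul1g.
    by rewrite hmul e.
  apply: open_comp; last exact: hop.
  by move=> x _; apply: left_transl_cont.
have [|D' _ cov] := cc G [set: G] f fop.
  by move=> x _; exists x.
exists (enum_fset D') => g.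
have [h hD fh] := cov g I.
by exists h.
Qed.

Lemma fin_span (k : fieldType) (V : lmodType k) (rho : G -> V -> V)
  (hV : is_smooth_rep rho) (irr : irreducible_rep rho) :
  exists s : seq V, forall v, spanned s v.
Proof.
have [[hlin h1 hmul] _] := hV.
case: (irr) => [[v0 nv0] irr2].
have [gs hgs] := finite_orbit hV v0.
pose s := [seq rho h v0 | h <- gs].
have orb : forall g, spanned s (rho g v0).
  move=> g; have [h hh ->] := hgs g; apply: spanned_mem.
  exact: map_f.
have Ssub : is_subspace (spanned s).
  split; first exact: spanned0.
  by move=> a u w; apply: spanned_lin.
have Sst : forall g v, spanned s v -> spanned s (rho g v).
  move=> g v [x ->]; rewrite /lc (llsum (hlin g)).
  apply: spanned_sum => i _; rewrite (llZ (hlin g)).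
  have := spanned_lin (x i) (orb (pg_mul g (nth (pg_one G) gs i))) (spanned0 s).
  rewrite addr0 hmul (nth_map (pg_one G)) //.
  by rewrite -(size_map (fun h => rho h v0)).
exists s; case: (irr2 _ Ssub Sst) => [S0|-> //].
exfalso; apply/negP: nv0; apply/negPn/eqP.
have : spanned s v0 by rewrite -[v0]h1; apply: orb.
by rewrite S0.
Qed.
End Orbit.



Lemma exists_eig (K : closedFieldType) n (P : 'M[K]_n) :
  (0 < n)%N -> exists l, ~~ row_free (P - l%:M).
Proof.
case: n P => // n P _.
have [l hl] : exists l, root (char_poly P) l.
  by apply/closed_rootP; rewrite size_char_poly.
exists l; rewrite -eigenvalue_root_char in hl.
case/eigenvalueP: hl => v hv nz; apply/negP => rf.
have : v *m (P - l%:M) == 0 by rewrite mulmxBr hv mul_mx_scalar subrr.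
by rewrite mulmx_free_eq0 // (negbTE nz).
Qed.

Lemma trmxZ' (K : fieldType) p q (a : K) (M : 'M[K]_(p, q)) : (a *: M)^T = a *: M^T.
Proof. by apply/matrixP => i j; rewrite !mxE. Qed.

Lemma tr_mul_entry (K : fieldType) p q (u : 'rV[K]_p) (w : 'rV[K]_q) j l :
  (u^T *m w) j l = u 0 j * w 0 l.
Proof. by rewrite !mxE big_ord1 !mxE. Qed.

Section Two.
Variables (G : profiniteGroup) (k : closedFieldType).
Variables (V W : lmodType k) (rhoV : G -> V -> V) (rhoW : G -> W -> W).
Hypothesis repV : is_rep rhoV.
Hypothesis repW : is_rep rhoW.
Hypothesis irrV : irreducible_rep rhoV.
Hypothesis irrW : irreducible_rep rhoW.
Variables (n m : nat) (e : 'I_n -> V) (cV : V -> 'rV[k]_n)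
  (f : 'I_m -> W) (cW : W -> 'rV[k]_m).
Hypothesis ecV : forall v, \sum_j cV v 0 j *: e j = v.
Hypothesis ceV : forall x : 'rV[k]_n, cV (\sum_j x 0 j *: e j) = x.
Hypothesis ecW : forall v, \sum_j cW v 0 j *: f j = v.
Hypothesis ceW : forall x : 'rV[k]_m, cW (\sum_j x 0 j *: f j) = x.

Definition Mat (t : tensor V W) : 'M[k]_(n, m) :=
  \sum_(p <- t) (cV p.1)^T *m cW p.2.

Lemma Mat_eq t t' : tensor_eq t t' -> Mat t = Mat t'.
Proof.
move=> H; apply/matrixP => j l.
pose B (v : V) (w : W) := cV v 0 j * cW w 0 l.
have bil : bilinear_form B.
  split=> a v v' w; rewrite /B.
    by rewrite (c_lin ecV ceV) !mxE mulrDl mulrA.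
  by rewrite (c_lin ecW ceW) !mxE mulrDr mulrCA.
have E : forall s, Mat s j l = tensor_eval B s.
  by move=> s; rewrite /Mat summxE /tensor_eval; apply: eq_bigr => p _; apply: tr_mul_entry.
by rewrite !E; apply: H.
Qed.

Lemma eval_Mat B t : bilinear_form B ->
  tensor_eval B t = \sum_j \sum_l Mat t j l * B (e j) (f l).
Proof.
case=> bl br; rewrite /tensor_eval.
have E1 : forall p : V * W, B p.1 p.2 =
    \sum_j \sum_l (cV p.1 0 j * cW p.2 0 l) * B (e j) (f l).
  move=> p; rewrite -{1}(ecV p.1) (klsum (h := fun v => B v p.2)); last first.
    by move=> *; apply: bl.
  apply: eq_bigr => j _.
  rewrite -{1}(ecW p.2) (klsum (h := B (e j))); last by move=> *; apply: br.
  rewrite mulr_sumr; apply: eq_bigr => l _.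
  by rewrite mulrA.
under eq_bigr => p _ do rewrite E1.
rewrite exchange_big; apply: eq_bigr => j _.
rewrite exchange_big; apply: eq_bigr => l _.
rewrite /Mat summxE mulr_suml; apply: eq_bigr => p _.
by rewrite tr_mul_entry.
Qed.

Lemma eq_Mat t t' : Mat t = Mat t' -> tensor_eq t t'.
Proof. by move=> hM B hB; rewrite !eval_Mat // hM. Qed.

Lemma Mat_act g t :
  Mat (tensor_act rhoV rhoW g t) = (Amx rhoV e cV g)^T *m Mat t *m Amx rhoW f cW g.
Proof.
rewrite /Mat /tensor_act big_map mulmx_sumr mulmx_suml; apply: eq_bigr => p _.
rewrite (c_act repV ecV ceV) (c_act repW ecW ceW).
by rewrite trmx_mul !mulmxA.
Qed.

Lemma Mat_scale a t : Mat (tensor_scale a t) = a *: Mat t.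
Proof.
rewrite /Mat /tensor_scale big_map scaler_sumr; apply: eq_bigr => p _ /=.
by rewrite (llZ (c_lin ecV ceV)) trmxZ' scalemxAl.
Qed.

Lemma Mat_add t t' : Mat (tensor_add t t') = Mat t + Mat t'.
Proof. by rewrite /Mat /tensor_add big_cat. Qed.

Lemma Mat_zero : Mat (tensor_zero V W) = 0.
Proof. by rewrite /Mat big_nil. Qed.

Variable chi : G -> k.
Definition AV := Amx rhoV e cV.
Definition AW := Amx rhoW f cW.
Definition Sol (M : 'M[k]_(n, m)) := forall g, (AV g)^T *m M *m AW g = chi g *: M.

Lemma solV M : Sol M -> forall g, (M^T *m AV g <= M^T)%MS.
Proof.
move=> hM g.
have e1 : M^T *m AV g = chi g *: ((AW (pg_inv g))^T *m M^T).
  have := congr1 trmx (hM g); rewrite trmxZ' !trmx_mul trmxK => h.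
  rewrite scalemxAr -h !mulmxA -trmx_mul.
  by rewrite /AW (Amx_inv repW ecW ceW) trmx1 mul1mx.
by rewrite e1 scalemx_sub // submxMl.
Qed.

Lemma solW M : Sol M -> forall g, (M *m AW g <= M)%MS.
Proof.
move=> hM g.
have e1 : M *m AW g = chi g *: ((AV (pg_inv g))^T *m M).
  rewrite scalemxAr -hM !mulmxA -trmx_mul.
  by rewrite /AV (Amx_inv repV ecV ceV) trmx1 mul1mx.
by rewrite e1 scalemx_sub // submxMl.
Qed.

Lemma sol_comb M1 M2 l : Sol M1 -> Sol M2 -> Sol (M2 - l *: M1).
Proof.
move=> h1 h2 g.
rewrite mulmxBr mulmxBl -scalemxAr -scalemxAl h1 h2.
by rewrite scalerBr !scalerA mulrC.
Qed.

Lemma key M1 M2 : Sol M1 -> Sol M2 -> M1 != 0 -> exists l, M2 = l *: M1.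
Proof.
move=> h1 h2 nz.
have full1 : row_full M1.
  case: (irr_mx repW ecW ceW irrW (solW h1)) => // M0.
  by rewrite M0 eqxx in nz.
pose P := M2 *m pinvmx M1.
have hP : P *m M1 = M2 by rewrite /P mulmxKpV // submx_full.
have [l hl] := exists_eig P (dim_gt0 ecV irrV).
exists l; apply/eqP; rewrite -subr_eq0; apply/eqP.
set Q := M2 - l *: M1.
have hQ : Q = (P - l%:M) *m M1 by rewrite /Q mulmxBl hP mul_scalar_mx.
have rk : (\rank Q < n)%N.
  rewrite hQ; apply: leq_ltn_trans (mxrankM_maxl _ _) _.
  by rewrite ltn_neqAle hl rank_leq_row.
case: (irr_mx repV ecV ceV irrV (solV (sol_comb l h1 h2))) => [Q0|].
  by rewrite -[Q]trmxK Q0 trmx0.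
by rewrite /row_full mxrank_tr => /eqP rkn; rewrite rkn ltnn in rk.
Qed.
End Two.

Unset Implicit Arguments.
Theorem mainTheorem14 (G : profiniteGroup) (k : closedFieldType)
  (V : lmodType k) (rhoV : G -> V -> V)
  (W : lmodType k) (rhoW : G -> W -> W)
  (chi : G -> k)
  (hV : is_smooth_rep rhoV) (irrV : irreducible_rep rhoV)
  (hW : is_smooth_rep rhoW) (irrW : irreducible_rep rhoW)
  (hchi : is_smooth_char chi) :
  ~ char_twice_in_tensor rhoV rhoW chi.
Proof.
move=> [t1 [t2 [h1 h2 hind]]].
have [hrV _] := hV; have [hrW _] := hW.
have [sV hsV] := fin_span hV irrV; have [n [e [cV [ecV ceV]]]] := fin_basis hsV.
have [sW hsW] := fin_span hW irrW; have [m [f [cW [ecW ceW]]]] := fin_basis hsW.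
have sol : forall t, (forall g, tensor_eq (tensor_act rhoV rhoW g t) (tensor_scale (chi g) t)) ->
    Sol rhoV rhoW e cV f cW chi (Mat cV cW t).
  move=> t ht g; have := Mat_eq ecV ceV ecW ceW (ht g).
  by rewrite (Mat_act hrV hrW ecV ceV ecW ceW) (Mat_scale cW ecV ceV).
have ind : forall a b, a *: Mat cV cW t1 + b *: Mat cV cW t2 = 0 -> a = 0 /\ b = 0.
  move=> a b hab; apply: hind; apply: (eq_Mat ecV ecW).
  by rewrite Mat_add !(Mat_scale cW ecV ceV) Mat_zero.
have S1 := sol _ h1; have S2 := sol _ h2.
case: (eqVneq (Mat cV cW t1) 0) => [M0|nz].
  have := ind 1 0; rewrite M0 scaler0 scale0r addr0 => /(_ erefl) [/eqP].
  by rewrite oner_eq0.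
have [l hl] := key hrV hrW irrV irrW ecV ceV ecW ceW S1 S2 nz.
have := ind (- l) 1; rewrite hl scale1r scaleNr addNr => /(_ erefl) [_ /eqP].
by rewrite oner_eq0.
Qed.
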